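(* Let $G_i=(V,E)$ be a fixed graph with a distinguished vertex $v_i$, let $k$ be an integer and $c\in[k]$ such that some proper $k$-colouring of $G_i$ assigns $c$ to $v_i$. Let $M=x_1,x_2,\dots,x_l$ be a path in $G_i$ with $x_1=v_i$, and let $E$ be the event ''$M$ is a path of disagreement'' (all of $x_1,\dots,x_l$ are disagreeing). Then $\mathcal{L}_{G_i,k}[E]\le\mathcal{P}_{G_i,k}[E]$.
   Context: $[k]=\{1,\dots,k\}$. The distribution $\mathcal{L}_{G_i,k}$: choose a proper $k$-colouring $\sigma$ uniformly at random among those with $\sigma_{v_i}=c$; choose $q$ uniformly at random from $[k]\setminus\{c\}$; form the disagreement graph $Q_{c,q}$, the subgraph of $G_i$ induced by all vertices reachable from $v_i$ by a path in $G_i$ whose vertices all have colour in $\{c,q\}$; a vertex is ''disagreeing'' if it belongs to $Q_{c,q}$ and ''non-disagreeing'' otherwise. The product measure $\mathcal{P}_{G_i,k}$: independently, each vertex $w$ is disagreeing with probability $q_w=\frac{1}{k-\deg_i(w)}$ (with $q_w=1$ if $k\le\deg_i(w)$), where $\deg_i(w)$ is the degree of $w$ in $G_i$, except that $v_i$ is disagreeing with probability $1$. *)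

(* Defs.v *)
(* Graph = symmetric irreflexive relation e on a finType T.
   Colours [k] = 'I_k (0-indexed). *)
From HB Require Import structures.
From mathcomp Require Import all_boot all_order all_algebra.
Set Implicit Arguments. Unset Strict Implicit. Unset Printing Implicit Defensive.
Import Order.TTheory GRing.Theory Num.Theory.
Local Open Scope ring_scope.

Section Defs.
Variables (T : finType) (e : rel T).

Definition proper_col (k : nat) (s : {ffun T -> 'I_k}) : bool :=
  [forall x, forall y, e x y ==> (s x != s y)].

Definition deg (w : T) : nat := #|[set u | e w u]|.

Definition dis_rel (k : nat) (s : {ffun T -> 'I_k}) (c q : 'I_k) : rel T :=
  fun x y => [&& e x y, s x \in [:: c; q] & s y \in [:: c; q]].

Definition disagreeing (v : T) (k : nat) (s : {ffun T -> 'I_k}) (c q : 'I_k)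
  (w : T) : bool :=
  (s v \in [:: c; q]) && connect (dis_rel s c q) v w.

(* L_{G,k}[all vertices of M disagreeing]: sigma uniform among proper
   colourings with sigma v = c, q uniform in [k] \ {c}, independently *)
Definition probL (R : realFieldType) (v : T) (k : nat) (c : 'I_k) (M : seq T) : R :=
  (\sum_(s : {ffun T -> 'I_k} | proper_col s && (s v == c))
     \sum_(q : 'I_k | q != c) (all (disagreeing v s c q) M)%:R)
  / (#|[set s : {ffun T -> 'I_k} | proper_col s && (s v == c)]| * (k - 1))%:R.

(* disagreement probability of w under the product measure *)
Definition qw (R : realFieldType) (k : nat) (v w : T) : R :=
  if w == v then 1
  else if (deg w < k)%N then ((k - deg w)%:R)^-1 else 1.

Definition probP (R : realFieldType) (k : nat) (v : T) (M : seq T) : R :=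
  \sum_(D : {set T} | all (fun x => x \in D) M)
     \prod_(w : T) (if w \in D then qw R k v w else 1 - qw R k v w).

End Defs.

(* Main.v *)
Require Import Defs.
From HB Require Import structures.
From mathcomp Require Import all_boot all_order all_algebra.
Set Implicit Arguments. Unset Strict Implicit. Unset Printing Implicit Defensive.
Import Order.TTheory GRing.Theory Num.Theory.

Section Key.
Variables (T : finType) (e : rel T) (v : T) (k : nat) (c : 'I_k).
Hypotheses (irr : irreflexive e) (sym : symmetric e).

Definition Sset (L : seq (T * 'I_k)) : {set {ffun T -> 'I_k}} :=
  [set s | [&& proper_col e s, s v == c & all (fun p => s p.1 == p.2) L]].

Definition upd (x : T) (s : {ffun T -> 'I_k}) (b : 'I_k) : {ffun T -> 'I_k} :=
  [ffun y => if y == x then b else s y].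

Lemma properP (s : {ffun T -> 'I_k}) : proper_col e s -> forall y z, e y z -> s y != s z.
Proof. by move=> /forallP H y z; move: (H y) => /forallP /(_ z) /implyP. Qed.

Lemma key_nat (L : seq (T * 'I_k)) x a :
  x \notin map fst L -> x != v ->
  (#|Sset ((x, a) :: L)| * (k - deg e x) <= #|Sset L|)%N.
Proof.
move=> xL xv.
set S' := Sset ((x, a) :: L); set S := Sset L.
set N := [set u | e x u].
have H1 : forall s, s \in S' -> (k - deg e x <= #|[set b | upd x s b \in S]|)%N.
  move=> s Hs.
  apply: (@leq_trans #|~: (s @: N)|).
    apply: (@leq_trans (k - #|s @: N|)).
      by apply: leq_sub2l; rewrite /deg -/N; apply: leq_imset_card.
    by have := cardsC (s @: N); rewrite card_ord => E; rewrite -{1}E addKn.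
  apply/subset_leq_card/subsetP => b; rewrite in_setC => hb.
  move: Hs; rewrite /S' /Sset !inE => /and3P [pr sv /andP [sx sL]].
  apply/and3P; split.
  - apply/forallP => y; apply/forallP => z; apply/implyP => eyz.
    rewrite !ffunE.
    case: (eqVneq y x) => [eyx|yx]; case: (eqVneq z x) => [ezx|zx].
    + by rewrite eyx ezx irr in eyz.
    + apply: contra hb => /eqP ->; apply/imsetP; exists z => //; rewrite inE.
      by rewrite -eyx.
    + apply: contra hb => /eqP <-; apply/imsetP; exists y => //; rewrite inE sym.
      by rewrite -ezx.
    + exact: (properP pr).
  - by rewrite ffunE (negbTE (_ : v != x)) // eq_sym.
  - apply/allP => p pL; rewrite ffunE.
    have : p.1 != x by apply: contraNneq xL => <-; apply: map_f.
    move/negbTE => ->; exact: (allP sL).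
have inj : {in [set p : {ffun T -> 'I_k} * 'I_k | (p.1 \in S') && (upd x p.1 p.2 \in S)] &,
              injective (fun p => upd x p.1 p.2)}.
  move=> [s1 b1] [s2 b2]; rewrite !inE /= => /andP [h1 _] /andP [h2 _] E.
  have Eb : b1 = b2 by move: (congr1 (fun f : {ffun T -> 'I_k} => f x) E); rewrite !ffunE eqxx.
  subst b2; congr pair; apply/ffunP => y.
  case: (eqVneq y x) => [->|yx].
    by move: h1 h2 => /and4P [_ _ /eqP -> _] /and4P [_ _ /eqP -> _].
  by move: (congr1 (fun f : {ffun T -> 'I_k} => f y) E); rewrite !ffunE (negbTE yx).
apply: (@leq_trans (\sum_(s in S') \sum_(b | upd x s b \in S) 1)).
  rewrite -sum_nat_const; apply: leq_sum => s Hs; rewrite sum1dep_card.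
  have := H1 s Hs. by rewrite -cardsE.
rewrite pair_big_dep sum1dep_card.
rewrite -(card_in_imset inj).
apply/subset_leq_card/subsetP => y /imsetP [p]; rewrite inE => /andP [_ h] ->.
exact: h.
Qed.

Lemma key_real (R : realFieldType) (L : seq (T * 'I_k)) x a :
  x \notin map fst L -> x != v ->
  (#|Sset ((x, a) :: L)|%:R <= qw e R k v x * #|Sset L|%:R :> R)%R.
Proof.
move=> xL xv; rewrite /qw (negbTE xv).
case: ltnP => hd.
  have kp : (0 < (k - deg e x)%:R :> R)%R by rewrite ltr0n subn_gt0.
  rewrite mulrC ler_pdivlMr // -natrM ler_nat.
  exact: key_nat.
rewrite mul1r ler_nat; apply/subset_leq_card/subsetP => s.
by rewrite !inE /= => /and4P [-> -> _ ->].
Qed.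

Definition col (q : 'I_k) (b : bool) := if b then q else c.
Fixpoint alt (q : 'I_k) (s : seq T) (b : bool) : seq (T * 'I_k) :=
  if s is x :: s' then (x, col q b) :: alt q s' (~~ b) else [::].

Lemma map_alt q s b : map fst (alt q s b) = s.
Proof. by elim: s b => //= x s IH b; rewrite IH. Qed.

Lemma chain (R : realFieldType) q s b : uniq (v :: s) ->
  (#|Sset (alt q s b)|%:R <= (\prod_(x <- s) qw e R k v x) * #|Sset [::]|%:R :> R)%R.
Proof.
elim: s b => [|x s IH] b /=; first by rewrite big_nil mul1r.
rewrite inE negb_or => /andP [/andP [vx vs] /andP [xs us]].
rewrite big_cons -mulrA.
have H := @key_real R (alt q s (~~ b)) x (col q b); rewrite map_alt eq_sym in H.
apply: le_trans (H xs vx) _.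
apply: ler_wpM2l; first by rewrite /qw; case: ifP => _ //; case: ifP => _ //; rewrite invr_ge0.
apply: IH; by rewrite /= vs us.
Qed.

Lemma alt_ok (s0 : {ffun T -> 'I_k}) q : proper_col e s0 -> q != c ->
  forall s u b, path e u s -> s0 u = col q b ->
  all (fun w => s0 w \in [:: c; q]) s -> all (fun p => s0 p.1 == p.2) (alt q s (~~ b)).
Proof.
move=> pr qc; elim=> [|x s IH] u b //= /andP [eux ps] su /andP [sx sa].
have nx := properP pr eux.
have sxe : s0 x = col q (~~ b).
  move: sx nx; rewrite su !inE /col; case: (b) => /=.
    by case/orP => /eqP -> //; rewrite eqxx.
  by case/orP => /eqP -> //; rewrite eqxx.
by rewrite sxe eqxx /=; exact: (IH x (~~ b) ps sxe sa).
Qed.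

Lemma last_cq (s0 : {ffun T -> 'I_k}) q p u :
  s0 u \in [:: c; q] -> path (dis_rel e s0 c q) u p -> s0 (last u p) \in [:: c; q].
Proof.
elim: p u => //= x p IH u _ /andP [h hp]; apply: IH hp.
by move: h; rewrite /dis_rel => /and3P [].
Qed.
End Key.

Local Open Scope ring_scope.

Lemma probP_eq (R : realFieldType) (T : finType) (e : rel T) (k : nat) (v : T) (M : seq T) :
  uniq M -> probP e R k v M = \prod_(x <- M) qw e R k v x.
Proof.
move=> uM.
set G := fun w => if w \in M then 0 else 1 - qw e R k v w.
transitivity (\prod_(w : T) (qw e R k v w + G w)).
  rewrite bigA_distr /probP big_mkcond /=; apply: eq_big => // D _.
  case: ifP => h.
    apply: eq_bigr => w _; case: ifP => // wD; rewrite /G.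
    case: ifP => // wM; by move/allP: h => /(_ w wM); rewrite wD.
  case/allPn: (negbT h) => x xM xD.
  rewrite (bigD1 x) //= (negbTE xD) /G xM mul0r //.
rewrite (big_uniq _ uM) [RHS]big_mkcond /=; apply: eq_bigr => w _.
by rewrite /G; case: ifP => _; rewrite ?addr0 // addrC subrK.
Qed.

Theorem lemma6 (R : realFieldType) (T : finType) (e : rel T) (v : T)
  (k : nat) (c : 'I_k) (s : seq T) :
  irreflexive e -> symmetric e -> (1 < k)%N ->
  (exists sigma : {ffun T -> 'I_k}, proper_col e sigma && (sigma v == c)) ->
  path e v s -> uniq (v :: s) ->
  probL e R v c (v :: s) <= probP e R k v (v :: s).
Proof.
move=> irr sym k1 [sg /andP [prg sgv]] pth un.
rewrite probP_eq // big_cons /qw eqxx mul1r -/(qw e R k v).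
set P := \prod_(x <- s) qw e R k v x.
have EZ : #|[set s0 : {ffun T -> 'I_k} | proper_col e s0 && (s0 v == c)]| = #|Sset e v c [::]|.
  by apply: eq_card => s0; rewrite !inE andbT.
have Zpos : (0 < #|Sset e v c [::]|)%N.
  by apply/card_gt0P; exists sg; rewrite !inE prg sgv.
have qsum : forall q, q != c ->
  \sum_(s0 : {ffun T -> 'I_k} | proper_col e s0 && (s0 v == c))
     (all (disagreeing e v s0 c q) (v :: s))%:R <= P * #|Sset e v c [::]|%:R.
  move=> q qc; apply: le_trans (chain c irr sym R q true un).
  set S := Sset e v c (alt c q s true).
  apply: (@le_trans _ _ (\sum_(s0 : {ffun T -> 'I_k} | proper_col e s0 && (s0 v == c))
                           (s0 \in S)%:R)).
    apply: ler_sum => s0 /andP [pr sv].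
    case: (boolP (all _ _)) => h; last by rewrite ler0n.
    have -> : s0 \in S.
      rewrite /S /Sset inE pr sv /=.
      have hcq : all (fun w => s0 w \in [:: c; q]) s.
        apply/allP => w ws; move/allP: h => /(_ w); rewrite inE ws orbT => /(_ isT).
        rewrite /disagreeing => /andP [sv0 /connectP [p pp ->]]; exact: last_cq sv0 pp.
      apply: (alt_ok pr qc (u:=v) (b:=false)) => //.
      by rewrite (eqP sv).
    by [].
  rewrite -sum1_card natr_sum [X in _ <= X]big_mkcond [X in X <= _]big_mkcond /=.
  apply: ler_sum => s0 _.
  by case: ifP => _; case: ifP.
rewrite /probL exchange_big /= EZ.
have kp : (0 < (k - 1)%:R :> R) by rewrite ltr0n subn_gt0.
rewrite ler_pdivrMr ?natrM ?mulr_gt0 ?ltr0n //.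
apply: (@le_trans _ _ (\sum_(q | q != c) (P * #|Sset e v c [::]|%:R))).
  by apply: ler_sum => q qc; apply: qsum.
rewrite sumr_const.
have -> : #|[pred q : 'I_k | q != c]| = (k - 1)%N.
  by have := cardC1 c; rewrite card_ord subn1 => <-; apply: eq_card.
  by rewrite [X in _ <= P * X]mulr_natr -mulrnAr.
by rewrite subn_gt0.
Qed.
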